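(* Let $G$ be a cyclically $4$-edge-connected cubic graph and $e$ an edge of $G$ contained in some cyclic $4$-edge-cut of $G$. Then there exist vertex sets $A_1\subseteq A_2\subseteq\cdots\subseteq A_k$, with $B_i=V(G)\setminus A_i$, such that every cyclic $4$-edge-cut of $G$ containing $e$ equals $E(A_i,B_i)$ for some $i\in\{1,\dots,k\}$.
   Context: Graphs may have parallel edges. For a partition $\{A,B\}$ of $V(G)$, $E(A,B)$ is the set of edges between $A$ and $B$; it is a $4$-edge-cut if it has exactly four edges, and cyclic if both $G[A]$ and $G[B]$ contain a cycle. $G$ is cyclically $4$-edge-connected if it has no cyclic edge-cut with fewer than four edges. *)

(* Defs.v *)
(* Finite loopless multigraphs (parallel edges allowed):
   vertex type V, edge type E (both finTypes), each edge x has two distinct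
   endpoints src x and tgt x. *)
From mathcomp Require Import all_boot.
Set Implicit Arguments. Unset Strict Implicit. Unset Printing Implicit Defensive.

Section MG.
Variables (V E : finType) (src tgt : E -> V).

Definition loopless : Prop := forall x : E, src x != tgt x.

Definition incident (x : E) (v : V) : bool := (src x == v) || (tgt x == v).

Definition joins (x : E) (u w : V) : bool :=
  ((src x == u) && (tgt x == w)) || ((src x == w) && (tgt x == u)).

(* cubic: every vertex has degree 3 (loopless, so degree = #incident edges) *)
Definition cubic : Prop :=
  forall v : V, #|[set x : E | incident x v]| = 3.

(* a cycle of G[A]: distinct vertices v_0..v_{n-1} of A and distinct edges
   e_0..e_{n-1}, n >= 1, with e_i joining v_i and v_{i+1 mod n}
   (n = 2 allowed: a pair of parallel edges). *)
Definition has_cycle_in (A : {set V}) : Prop :=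
  exists (v0 : V) (x0 : E) (vs : seq V) (es : seq E),
    [/\ 0 < size vs, size es = size vs, uniq vs && uniq es,
        all (fun v => v \in A) vs &
        forall i, i < size vs ->
          joins (nth x0 es i) (nth v0 vs i) (nth v0 vs (i.+1 %% size vs))].

Definition cut (A : {set V}) : {set E} :=
  [set x : E | ((src x \in A) && (tgt x \notin A)) ||
               ((tgt x \in A) && (src x \notin A))].

Definition is_bipartition (A : {set V}) : Prop :=
  A != set0 /\ ~: A != set0.

Definition cyclic_cut (A : {set V}) : Prop :=
  has_cycle_in A /\ has_cycle_in (~: A).

Definition cyclic_4_cut (A : {set V}) : Prop :=
  is_bipartition A /\ #|cut A| = 4 /\ cyclic_cut A.

Definition cyc4conn : Prop :=
  forall A : {set V}, is_bipartition A -> cyclic_cut A -> ~ (#|cut A| < 4).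
End MG.

(* Main.v *)
From Stdlib Require Import Lia.
Require Import Defs.
From mathcomp Require Import all_boot.
From Stdlib Require Import Classical ClassicalEpsilon.
Set Implicit Arguments. Unset Strict Implicit. Unset Printing Implicit Defensive.

Ltac tolia :=
  repeat match goal with H : is_true (_ <= _) |- _ => move/leP: H => H end;
  repeat match goal with H : (_ <= _) = false |- _ => move/negbT: H => H end;
  repeat match goal with H : is_true (~~ (_ <= _)) |- _ => rewrite -ltnNge in H end;
  repeat match goal with H : is_true (_ <= _) |- _ => move/leP: H => H end;
  try (apply/leP);
  repeat match goal with H : context[addn ?a ?b] |- _ => rewrite -[addn a b]/(Nat.add a b) in H end;
  repeat match goal with H : context[subn ?a ?b] |- _ => rewrite -[subn a b]/(Nat.sub a b) in H end;
  repeat match goal with H : context[muln ?a ?b] |- _ => rewrite -[muln a b]/(Nat.mul a b) in H end;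
  repeat match goal with |- context[addn ?a ?b] => rewrite -[addn a b]/(Nat.add a b) end;
  repeat match goal with |- context[subn ?a ?b] => rewrite -[subn a b]/(Nat.sub a b) end;
  repeat match goal with |- context[muln ?a ?b] => rewrite -[muln a b]/(Nat.mul a b) end;
  lia.

Lemma card_ind (T : finType) (S : {set T}) : #|S| = \sum_x (x \in S : nat).
Proof. rewrite -sum1_card big_mkcond /=; apply: eq_bigr => x _; by case: (x \in S). Qed.

Lemma card_lin (T : finType) (ls rs : seq {set T}) :
  (forall x, \sum_(S <- ls) (x \in S : nat) = \sum_(S <- rs) (x \in S : nat)) ->
  \sum_(S <- ls) #|S| = \sum_(S <- rs) #|S|.
Proof.
move=> H.
under eq_bigr => S _ do rewrite card_ind.
under [RHS]eq_bigr => S _ do rewrite card_ind.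
rewrite exchange_big [RHS]exchange_big; apply: eq_bigr => x _; exact: H.
Qed.

Lemma card2_ex (T : finType) (S : {set T}) (s : seq T) :
  2 <= #|S| -> size s <= 1 -> exists2 y, y \in S & y \notin s.
Proof.
move=> h2 hs; case: (boolP (S \subset [set z | z \in s])) => [sub|].
  have := subset_leq_card sub.
  have -> : #|[set z | z \in s]| = #|s| by apply: eq_card => z; rewrite inE.
  move=> h; have := card_size s => h'. tolia.
by case/subsetPn => y yS; rewrite inE => ys; exists y.
Qed.

Lemma card_le1_eq (T : finType) (S : {set T}) a b : #|S| <= 1 -> a \in S -> b \in S -> a = b.
Proof. by move/card_le1_eqP => h aS bS; apply: h. Qed.

Lemma card2_of (T : finType) (S : {set T}) a b : a \in S -> b \in S -> a != b -> 2 <= #|S|.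
Proof.
move=> aS bS ab; rewrite leqNgt; apply/negP => h.
by move: ab; rewrite (card_le1_eq _ aS bS) ?eqxx //; rewrite -ltnS.
Qed.
Lemma sum_eq1 (T : finType) (X : {set T}) (a : T) :
  \sum_(v in X) (a == v : nat) = (a \in X).
Proof.
rewrite -(@big_pred1_eq nat 0 addn _ a (fun v => (v \in X : nat))).
rewrite [LHS]big_mkcond [RHS]big_mkcond /=; apply: eq_bigr => v _.
by case: (eqVneq v a) => [->|ne]; rewrite ?eqxx //; case: (v \in X); rewrite // eq_sym (negbTE ne).
Qed.

Section G.
Variables (V E : finType) (src tgt : E -> V).
Hypothesis Hloop : loopless src tgt.
Hypothesis Hcub : cubic src tgt.

Definition inS (X : {set V}) : {set E} := [set x | (src x \in X) && (tgt x \in X)].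

Lemma joinsC x u w : joins src tgt x u w = joins src tgt x w u.
Proof. by rewrite /joins orbC. Qed.

Lemma joins_inc z a b v : joins src tgt z a b -> incident src tgt z v -> v = a \/ v = b.
Proof.
rewrite /joins /incident.
case/orP => /andP [/eqP h1 /eqP h2] /orP [] /eqP h3; subst; auto.
Qed.

Lemma cutC (A : {set V}) : cut src tgt (~: A) = cut src tgt A.
Proof. apply/setP => x; rewrite /cut !inE !negbK; by case: (src x \in A); case: (tgt x \in A). Qed.

Lemma handshake (X : {set V}) : 3 * #|X| = 2 * #|inS X| + #|cut src tgt X|.
Proof.
have h1 : \sum_(v in X) #|[set x | incident src tgt x v]| = 3 * #|X|.
  rewrite (eq_bigr (fun _ => 3)); last by move=> v _; rewrite Hcub.
  by rewrite sum_nat_const mulnC.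
rewrite -h1.
under eq_bigr => v _ do rewrite card_ind.
rewrite exchange_big /=.
have h2 : forall x, \sum_(v in X) (x \in [set x0 | incident src tgt x0 v] : nat)
   = (src x \in X) + (tgt x \in X).
  move=> x; rewrite -!sum_eq1 -big_split /=; apply: eq_bigr => v _.
  rewrite inE /incident; have := Hloop x.
  case: (eqVneq (src x) v) => [h|h]; case: (eqVneq (tgt x) v) => [h'|h'] //=.
  by rewrite h h' eqxx.
under eq_bigr => x _ do rewrite h2.
rewrite (card_ind (inS X)) (card_ind (cut src tgt X)) big_distrr /= -big_split /=; apply: eq_bigr => x _.
rewrite /cut !inE; by case: (src x \in X); case: (tgt x \in X).
Qed.
Lemma has_cycle_sub (A B : {set V}) : A \subset B -> has_cycle_in src tgt A -> has_cycle_in src tgt B.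
Proof.
move=> sAB [v0 [x0 [vs [es [h1 h2 h3 h4 h5]]]]].
exists v0, x0, vs, es; split=> //.
apply/allP => v vin; apply: (subsetP sAB); exact: (allP h4).
Qed.

Lemma joins_in (A : {set V}) z a b : joins src tgt z a b -> a \in A -> b \in A -> z \in inS A.
Proof.
rewrite /joins inE; case/orP => /andP [/eqP -> /eqP ->] -> -> //.
Qed.

Lemma joins_loop z a : joins src tgt z a a -> False.
Proof.
move=> h; have := Hloop z; move: h; rewrite /joins; case/orP => /andP [/eqP h1 /eqP h2]; by rewrite h1 h2 eqxx.
Qed.

Lemma cyc_inS2 (A : {set V}) : has_cycle_in src tgt A -> 2 <= #|inS A|.
Proof.
move=> [v0 [x0 [vs [es [h1 h2 /andP [u1 u2] h4 h5]]]]].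
have nthA : forall i, i < size vs -> nth v0 vs i \in A.
  by move=> i hi; apply: (allP h4); apply: mem_nth.
have ge2 : 1 < size vs.
  case: (ltnP 1 (size vs)) => // hle.
  have hs : size vs = 1 by apply/eqP; rewrite eqn_leq hle h1.
  have := h5 0 h1; rewrite hs modnn => /joins_loop [].
have j0 := h5 0 (ltnW ge2); have j1 := h5 1 ge2.
apply: (@card2_of _ _ (nth x0 es 0) (nth x0 es 1)).
- apply: (joins_in j0); apply: nthA => //; by rewrite ltn_mod (ltnW ge2).
- apply: (joins_in j1); apply: nthA => //; by rewrite ltn_mod (ltnW ge2).
- by rewrite nth_uniq // h2 // (ltnW ge2).
Qed.
Definition pth (X : {set V}) (d : V) (e0 : E) (v0 : V) (vs : seq V) (es : seq E) :=
  [/\ size vs = size es, uniq (v0 :: vs), all (fun v => v \in X) (v0 :: vs), uniq es &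
      forall i, i < size es -> joins src tgt (nth e0 es i) (nth d (v0 :: vs) i) (nth d (v0 :: vs) i.+1)].

Definition deg2 (X : {set V}) :=
  forall v, v \in X -> 2 <= #|[set x in inS X | incident src tgt x v]|.

Lemma pth_step X d e0 v0 vs es : deg2 X -> pth X d e0 v0 vs es ->
  has_cycle_in src tgt X \/ exists w y, pth X d e0 w (v0 :: vs) (y :: es).
Proof.
move=> hd [hs hu ha hue hj].
have v0X : v0 \in X by move: ha => /= /andP [].
have hsz : size (take 1 es) <= 1 by rewrite size_take; case: (ltnP 1 (size es)).
have [y yS yn] := card2_ex (hd _ v0X) hsz.
move: yS; rewrite !inE => /andP [/andP [sy ty] yinc].
set w := if src y == v0 then tgt y else src y.
have hyj : joins src tgt y v0 w.
  rewrite /joins /w; case: eqP => h /=; first by rewrite h !eqxx.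
  move: yinc; rewrite /incident; case: eqP => //= _ /eqP ->; by rewrite !eqxx.
have hwX : w \in X by rewrite /w; case: ifP.
have hw0 : w != v0 by apply/eqP => hh; move: hyj; rewrite hh => /joins_loop.
move: hu => /= /andP [v0n uvs].
have yne : y \notin es.
  apply/negP => yin.
  have hi : index y es < size es by rewrite index_mem.
  have hy := nth_index e0 yin.
  move: hi hy; case: (index y es) => [|k] hi hy.
    have : nth e0 es 0 \in take 1 es.
      by rewrite -(@nth_take 1) // mem_nth // size_take; case: (ltnP 1 (size es)).
    by rewrite hy (negbTE yn).
  have := hj _ hi; rewrite hy /= => hjk.
  have hk1 : k.+1 < size vs by rewrite hs.
  case: (joins_inc hjk yinc) => h; move: v0n; rewrite h mem_nth //; exact: ltnW.
case: (boolP (w \in vs)) => wvs.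
- left.
  set j := index w vs.
  have hjs : j < size vs by rewrite index_mem.
  have hwj : nth d vs j = w by rewrite nth_index.
  have hjes : j.+1 <= size es by rewrite -hs.
  have sz1 : size (take j.+1 es) = j.+1 by rewrite size_takel.
  have nthL : forall i, i <= j.+1 -> nth d (v0 :: take j.+1 vs) i = nth d (v0 :: vs) i.
    by case=> [|k] //= hk; rewrite nth_take.
  exists d, e0, (v0 :: take j.+1 vs), (rcons (take j.+1 es) y); split.
  + by [].
  + by rewrite size_rcons sz1 /= size_takel.
  + rewrite rcons_uniq take_uniq // andbT /= take_uniq // andbT.
    apply/andP; split; apply/negP => h.
      have := mem_take h; by rewrite ?(negbTE v0n) ?(negbTE yne).
    have := mem_take h; by rewrite ?(negbTE v0n) ?(negbTE yne).
  + rewrite /= v0X /=; apply/allP => v /mem_take hv; move: ha => /= /andP [_ /allP]; apply.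
    exact: hv.
  + rewrite /= size_takel // => i hi.
    rewrite nth_rcons sz1.
    case: (ltnP i j.+1) => hij.
      rewrite nth_take // modn_small // nthL // nthL //; exact: hj (leq_trans hij hjes).
    have hij' : i = j.+1 by apply/eqP; rewrite eqn_leq hij andbT -ltnS.
    by rewrite hij' eqxx modnn nthL //= hwj joinsC.
- right; exists w, y; split.
  + by rewrite /= hs.
  + by rewrite /= inE negb_or hw0 wvs v0n uvs.
  + by rewrite /= hwX.
  + by rewrite /= yne hue.
  + case=> [|k] hk /=; first by rewrite joinsC.
    exact: hj.
Qed.

Lemma pth_cycle X d e0 : deg2 X -> forall n v0 vs es, #|V| - size vs <= n ->
  pth X d e0 v0 vs es -> has_cycle_in src tgt X.
Proof.
move=> hd; elim=> [|n IH] v0 vs es hn hp; case: (pth_step hd hp) => // [[w [y hp']]].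
- case: hp' => _ hu _ _ _.
  move/card_uniqP: hu => h2; have h1 := max_card (mem (w :: v0 :: vs)).
  move: h1; rewrite h2 /= => h1; exfalso; move: hn; rewrite leqn0 subn_eq0 => hn; have h3 := leq_trans h1 hn; tolia.
- apply: (IH w (v0 :: vs) (y :: es)) => //=; rewrite subnS -subn1 leq_subLR add1n; exact: hn.
Qed.

Lemma deg2_cycle X : X != set0 -> deg2 X -> has_cycle_in src tgt X.
Proof.
case/set0Pn => v vX hd.
have /card_gt0P [e0 _] : 0 < #|[set x in inS X | incident src tgt x v]|.
  exact: leq_trans _ (hd v vX).
apply: (@pth_cycle X v e0 hd #|V| v [::] [::]); first by rewrite subn0.
by split=> //=; rewrite vX.
Qed.
Lemma forest_n n (X : {set V}) : #|X| <= n -> ~ has_cycle_in src tgt X -> X != set0 -> #|inS X| < #|X|.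
Proof.
elim: n X => [|n IH] X hn hc hX.
  by move: hX; rewrite -card_gt0; move: hn; rewrite leqn0 => /eqP ->.
set S := fun v => [set x in inS X | incident src tgt x v].
case: (boolP [exists v in X, #|S v| <= 1]) => hex; last first.
  exfalso; apply: hc; apply: deg2_cycle => // v vX.
  move/exists_inPn: hex => h; have := h v vX; by rewrite -ltnNge.
case/exists_inP: hex => v vX hv.
have hcard := cardsD1 v X; rewrite vX add1n in hcard.
have hsub : inS X \subset inS (X :\ v) :|: S v.
  apply/subsetP => x; rewrite !inE /incident => /andP [sx tx].
  rewrite sx tx /=.
  by case: (eqVneq (src x) v); case: (eqVneq (tgt x) v); rewrite ?orbT //= => -> ->.
case: (eqVneq (X :\ v) set0) => hX'.
  have -> : inS X = set0.
    apply/setP => x; rewrite !inE; apply/negP => /andP [sx tx].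
    have hs : src x = v by move/setP: hX' => /(_ (src x)); rewrite !inE sx andbT => /negbT; rewrite negbK => /eqP.
    have ht : tgt x = v by move/setP: hX' => /(_ (tgt x)); rewrite !inE tx andbT => /negbT; rewrite negbK => /eqP.
    by move: (Hloop x); rewrite hs ht eqxx.
  by rewrite cards0 card_gt0.
have IH' := IH (X :\ v).
have h1 : #|X :\ v| <= n by move: hn; rewrite hcard.
have h2 : ~ has_cycle_in src tgt (X :\ v) by move=> h; apply: hc; apply: (has_cycle_sub _ h); apply: subsetDl.
have h3 := IH' h1 h2 hX'.
have h4 := subset_leq_card hsub.
have h5 := leq_card_setU (inS (X :\ v)) (S v).
move: h5 => [h5 _].
rewrite hcard; tolia.
Qed.

Lemma forest_cut (X : {set V}) : ~ has_cycle_in src tgt X -> X != set0 -> #|X| + 2 <= #|cut src tgt X|.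
Proof.
move=> hc hX; have h1 := forest_n (leqnn _) hc hX; have h2 := handshake X; tolia.
Qed.

Lemma cut_lb (C4 : cyc4conn src tgt) (X : {set V}) : X != set0 -> ~: X != set0 ->
  3 <= #|cut src tgt X| /\ (#|cut src tgt X| <= 3 -> #|X| <= 1 \/ #|~: X| <= 1).
Proof.
move=> hX hXc.
case: (classic (has_cycle_in src tgt X)) => c1; last first.
  have h := forest_cut c1 hX; have h0 : 0 < #|X| by rewrite card_gt0.
  split; first by tolia. move=> h3; left; tolia.
case: (classic (has_cycle_in src tgt (~: X))) => c2; last first.
  have h := forest_cut c2 hXc; have h0 : 0 < #|~: X| by rewrite card_gt0.
  rewrite cutC in h.
  split; first by tolia. move=> h3; right; tolia.
have h := C4 X (conj hX hXc) (conj c1 c2).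
have h' : 4 <= #|cut src tgt X| by rewrite leqNgt; apply/negP.
split; first by tolia. move=> h3; exfalso; tolia.
Qed.
Definition btw (U W : {set V}) : {set E} :=
  [set x | ((src x \in U) && (tgt x \in W)) || ((src x \in W) && (tgt x \in U))].

Ltac edge_cases x A C :=
  rewrite /cut /btw /inS; rewrite !inE;
  case: (src x \in A); case: (src x \in C); case: (tgt x \in A); case: (tgt x \in C) => //=.

Ltac mklin A C L R H hyps :=
  have H := @card_lin _ L R; rewrite !big_cons !big_nil /= !addn0 in H;
  have {}H := H (fun x => ltac:(rewrite !big_cons !big_nil; hyps x; edge_cases x A C)).

Lemma le1_noloop (P : {set V}) x : #|P| <= 1 -> ~~ ((src x \in P) && (tgt x \in P)).
Proof.
move=> h; apply/negP => /andP [s t]; have := Hloop x; by rewrite (card_le1_eq h s t) eqxx.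
Qed.

Lemma no_cross (C4 : cyc4conn src tgt) e (A C : {set V}) :
  cyclic_4_cut src tgt A -> cyclic_4_cut src tgt C ->
  src e \in A -> src e \in C -> tgt e \notin A -> tgt e \notin C ->
  A \subset C \/ C \subset A.
Proof.
move=> [hbA [h4A [cycA cycBA]]] [hbC [h4C [cycC cycDC]]] hsA hsC htA htC.
case: (boolP (A \subset C)) => hAC; first by left.
case: (boolP (C \subset A)) => hCA; first by right.
exfalso.
case/subsetPn: hAC => u uA uC. case/subsetPn: hCA => w wC wA.
set P := A :&: ~: C. set Q := ~: A :&: C. set X := A :&: C. set Y := ~: A :&: ~: C.
have se_te : src e != tgt e := Hloop e.
have E1 := @card_lin _ [:: cut src tgt P; cut src tgt Q; btw X Y; btw X Y] [:: cut src tgt A; cut src tgt C].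
rewrite !big_cons !big_nil /= !addn0 in E1.
have {}E1 := E1 (fun x => ltac:(rewrite !big_cons !big_nil; unfold P, Q, X, Y; edge_cases x A C)).
have Pn : P != set0 by apply/set0Pn; exists u; rewrite /P !inE uA uC.
have Pcn : ~: P != set0 by apply/set0Pn; exists (src e); rewrite /P !inE hsC andbF.
have Qn : Q != set0 by apply/set0Pn; exists w; rewrite /Q !inE wA wC.
have Qcn : ~: Q != set0 by apply/set0Pn; exists (src e); rewrite /Q !inE hsA.
have [P3 P3'] := cut_lb C4 Pn Pcn.
have [Q3 Q3'] := cut_lb C4 Qn Qcn.
have eXY : 0 < #|btw X Y| by apply/card_gt0P; exists e; rewrite /btw /X /Y !inE hsA hsC htA htC.
have cP : #|cut src tgt P| <= 3 by tolia.
have cQ : #|cut src tgt Q| <= 3 by tolia.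
have P1 : #|P| <= 1.
  case: (P3' cP) => // h; exfalso.
  have m1 : src e \in ~: P by rewrite /P !inE hsC andbF.
  have m2 : tgt e \in ~: P by rewrite /P !inE (negbTE htA).
  have := card2_of m1 m2 se_te; by rewrite ltnNge h.
have Q1 : #|Q| <= 1.
  case: (Q3' cQ) => // h; exfalso.
  have m1 : src e \in ~: Q by rewrite /Q !inE hsA.
  have m2 : tgt e \in ~: Q by rewrite /Q !inE (negbTE htC) andbF.
  have := card2_of m1 m2 se_te; by rewrite ltnNge h.
have noPP := fun x => le1_noloop x P1.
have noQQ := fun x => le1_noloop x Q1.
have uP : u \in P by rewrite /P !inE uA uC.
have wQ : w \in Q by rewrite /Q !inE wA wC.
have hPu : forall v, (v \in P) = (v == u).
  by move=> v; apply/idP/eqP => [vP|->//]; exact: card_le1_eq P1 vP uP.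
have hQw : forall v, (v \in Q) = (v == w).
  by move=> v; apply/idP/eqP => [vQ|->//]; exact: card_le1_eq Q1 vQ wQ.
have degP : #|[set x | (src x \in P) || (tgt x \in P)]| = 3.
  by rewrite -(Hcub u); apply: eq_card => x; rewrite in_set (hPu (src x)) (hPu (tgt x)) in_set.
have degQ : #|[set x | (src x \in Q) || (tgt x \in Q)]| = 3.
  by rewrite -(Hcub w); apply: eq_card => x; rewrite in_set (hQw (src x)) (hQw (tgt x)) in_set.
mklin A C [:: [set x | (src x \in P) || (tgt x \in P)]] [:: btw X P; btw P Y; btw P Q] E2
   ltac:(fun x => have := noPP x; unfold P, Q, X, Y).
mklin A C [:: [set x | (src x \in Q) || (tgt x \in Q)]] [:: btw X Q; btw Q Y; btw P Q] E3
   ltac:(fun x => have := noQQ x; unfold P, Q, X, Y).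
mklin A C [:: cut src tgt A] [:: btw X Q; btw X Y; btw P Q; btw P Y] E4 ltac:(fun x => unfold P, Q, X, Y).
mklin A C [:: cut src tgt C] [:: btw X P; btw X Y; btw P Q; btw Q Y] E5 ltac:(fun x => unfold P, Q, X, Y).
mklin A C [:: cut src tgt X] [:: btw X P; btw X Q; btw X Y] E6 ltac:(fun x => unfold P, Q, X, Y).
mklin A C [:: cut src tgt Y] [:: btw X Y; btw P Y; btw Q Y] E7 ltac:(fun x => unfold P, Q, X, Y).
have Xn : X != set0 by apply/set0Pn; exists (src e); rewrite /X !inE hsA hsC.
have Xcn : ~: X != set0 by apply/set0Pn; exists (tgt e); rewrite /X !inE (negbTE htA).
have [X3 X3'] := cut_lb C4 Xn Xcn.
have Yn : Y != set0 by apply/set0Pn; exists (tgt e); rewrite /Y !inE htA htC.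
have Ycn : ~: Y != set0 by apply/set0Pn; exists (src e); rewrite /Y !inE hsA.
have [Y3 Y3'] := cut_lb C4 Yn Ycn.
have ha : 2 <= #|btw X P|.
  case: (leqP 2 #|btw X P|) => // hlt; exfalso.
  have cX : #|cut src tgt X| <= 3 by tolia.
  have X1 : #|X| <= 1.
    case: (X3' cX) => // h.
    have m1 : u \in ~: X by rewrite /X !inE (negbTE uC) andbF.
    have m2 : tgt e \in ~: X by rewrite /X !inE (negbTE htA).
    have ne : u != tgt e by apply/eqP => hh; move: htA; rewrite -hh uA.
    have := card2_of m1 m2 ne; by rewrite ltnNge h.
  have noXX := fun x => le1_noloop x X1.
  mklin A C [:: inS A] [:: btw X P] E8 ltac:(fun x => have := noPP x; have := noXX x; unfold P, Q, X, Y).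
  have := cyc_inS2 cycA => h8; tolia.
have hb : 2 <= #|btw P Y|.
  case: (leqP 2 #|btw P Y|) => // hlt; exfalso.
  have cY : #|cut src tgt Y| <= 3 by tolia.
  have Y1 : #|Y| <= 1.
    case: (Y3' cY) => // h.
    have m1 : w \in ~: Y by rewrite /Y !inE wC andbF.
    have m2 : src e \in ~: Y by rewrite /Y !inE hsA.
    have ne : w != src e by apply/eqP => hh; move: wA; rewrite hh hsA.
    have := card2_of m1 m2 ne; by rewrite ltnNge h.
  have noYY := fun x => le1_noloop x Y1.
  mklin A C [:: inS (~: A)] [:: btw Q Y] E9 ltac:(fun x => have := noQQ x; have := noYY x; unfold P, Q, X, Y).
  have := cyc_inS2 cycBA => h9; tolia.
tolia.
Qed.
End G.

Lemma cyc4_compl (V E : finType) (src tgt : E -> V) (A : {set V}) :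
  cyclic_4_cut src tgt A -> cyclic_4_cut src tgt (~: A).
Proof.
move=> [[h1 h2] [h3 [h4 h5]]]; split; [split|split] => //; first by rewrite setCK.
  by rewrite cutC.
by split => //; rewrite setCK.
Qed.

Lemma decP (P : Prop) : {b : bool | b = true <-> P}.
Proof.
apply: constructive_indefinite_description.
case: (classic P) => h; [exists true | exists false]; split => //; by move=> /h.
Qed.

Definition pb (V E : finType) (src tgt : E -> V) (e : E) (B : {set V}) : bool :=
  proj1_sig (decP (cyclic_4_cut src tgt B /\ e \in cut src tgt B /\ src e \in B)).

Lemma pbP (V E : finType) (src tgt : E -> V) (e : E) (B : {set V}) :
  pb src tgt e B -> cyclic_4_cut src tgt B /\ e \in cut src tgt B /\ src e \in B.
Proof. rewrite /pb; case: decP => b /= [h _]; exact: h. Qed.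

Lemma pbI (V E : finType) (src tgt : E -> V) (e : E) (B : {set V}) :
  cyclic_4_cut src tgt B /\ e \in cut src tgt B /\ src e \in B -> pb src tgt e B.
Proof. rewrite /pb; case: decP => b /= [_ h]; exact: h. Qed.

Lemma tgt_out (V E : finType) (src tgt : E -> V) (e : E) (B : {set V}) :
  e \in cut src tgt B -> src e \in B -> tgt e \notin B.
Proof.
rewrite /cut inE => /orP [/andP [_ h]|/andP [_ h]] hs //.
by rewrite hs in h.
Qed.

Theorem mainTheorem13 (V E : finType) (src tgt : E -> V) (e : E) :
  loopless src tgt ->
  cubic src tgt ->
  cyc4conn src tgt ->
  (exists A : {set V}, cyclic_4_cut src tgt A /\ e \in cut src tgt A) ->
  exists (k : nat) (As : nat -> {set V}),
    (forall i j, 1 <= i -> i <= j -> j <= k -> As i \subset As j) /\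
    (forall A : {set V}, cyclic_4_cut src tgt A -> e \in cut src tgt A ->
       exists i, 1 <= i <= k /\ cut src tgt A = cut src tgt (As i)).
Proof.
move=> hl hc c4 _.
exists #|V|, (fun i => \bigcup_(B | pb src tgt e B && (#|B| <= i)) B); split.
  move=> i j _ hij _; apply/bigcupsP => B /andP [pB hB].
  apply: (bigcup_sup B); rewrite pB /=; exact: leq_trans hB hij.
move=> A hA heA.
set A' := if src e \in A then A else ~: A.
have hA' : cyclic_4_cut src tgt A' /\ e \in cut src tgt A' /\ src e \in A'.
  rewrite /A'; case: ifP => h; first by [].
  split; first exact: (cyc4_compl hA).
  rewrite cutC; split => //; by rewrite in_setC h.
have hcut : cut src tgt A = cut src tgt A' by rewrite /A'; case: ifP => // _; rewrite cutC.
exists #|A'|; split.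
  case: hA' => [[[hn _] _] _]; apply/andP; split; first by rewrite card_gt0.
  exact: max_card.
rewrite hcut; congr (cut src tgt _).
apply/eqP; rewrite eqEsubset; apply/andP; split.
  by apply: (bigcup_sup A'); rewrite pbI // leqnn.
apply/bigcupsP => B /andP [pB hB].
have [hB4 [heB hsB]] := pbP pB.
case: hA' => hA4 [heA' hsA'].
case: (no_cross hl hc c4 hB4 hA4 hsB hsA' (tgt_out heB hsB) (tgt_out heA' hsA')) => // sub.
have : A' == B by rewrite eqEcard sub hB.
by move/eqP => ->.
Qed.
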